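(* Let $n,t,m$ be positive integers, $m\ge 0$ allowed, let $\sigma\in\mathcal{S}_n$, and let $\sigma_e$ be obtained from $\sigma$ by a burst of stuck-at errors of length at most $t$ with threshold $m$ (as defined in the context). For $i\ge1$ let $B_{i,1}=\{2(i-1)t+1,\ldots,2it\}\cap[n]$ and $B_{i,2}=\{t+2(i-1)t+1,\ldots,t+2it\}\cap[n]$. Let $E_1$ be the set of $i\in[\lceil n/(2t)\rceil]$ such that at least one value in $B_{i,1}$ does not appear in $\sigma_e$, and $E_2$ the set of $i\in[\lceil (n-t)/(2t)\rceil]$ such that at least one value in $B_{i,2}$ does not appear in $\sigma_e$. Then $|E_1|\le1$ or $|E_2|\le 1$.
   Context: $[n]=\{1,\ldots,n\}$; $\mathcal{S}_n$ is the set of permutations of $[n]$ written as sequences. Burst of stuck-at errors of length at most $t$ with threshold $m$: $\sigma_e\in[n]^n$ is obtained from $\sigma$ if there exist $j\in[n]$, $t_1\in[t]$ and positions $i_1,\ldots,i_{t_1}$ with $\sigma(i_\ell)=j+\ell-1$ and $\sigma(i_\ell)>m$ for all $\ell\in[t_1]$, such that $\sigma_e(i_\ell)=j$ for all $\ell\in[t_1]$ and $\sigma_e(i)=\sigma(i)$ for all other $i$. *)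

(* Defs.v *)
From mathcomp Require Import all_boot.
Set Implicit Arguments. Unset Strict Implicit. Unset Printing Implicit Defensive.

(* Positions are 0-based (position p < n is the
   paper's position p+1); values are the paper's values. *)
Definition is_perm_seq (n : nat) (s : seq nat) : Prop := perm_eq s (iota 1 n).

(* The paper's index l in [t1] is written l+1 here,
   so the condition sigma(i_l) = j + l - 1 becomes nth sigma (pos l) = j + l. *)
Definition burst_stuck (n t m : nat) (sigma sigma_e : seq nat) : Prop :=
  size sigma_e = n /\
  exists (j t1 : nat) (pos : nat -> nat),
    [/\ 1 <= j <= n, 1 <= t1 <= t,
        (forall l, l < t1 ->
           [/\ pos l < n, nth 0 sigma (pos l) = j + l, m < nth 0 sigma (pos l)
             & nth 0 sigma_e (pos l) = j]) &
        (forall i, i < n -> (forall l, l < t1 -> i <> pos l) ->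
           nth 0 sigma_e i = nth 0 sigma i)].

Definition ceil_div (a b : nat) : nat := (a + b.-1) %/ b.

Definition B1 (n t i : nat) : seq nat :=
  [seq v <- iota ((i.-1) * (2 * t)).+1 (2 * t) | v <= n].
Definition B2 (n t i : nat) : seq nat :=
  [seq v <- iota (t + (i.-1) * (2 * t)).+1 (2 * t) | v <= n].

Definition missing (B sigma_e : seq nat) : bool :=
  has (fun v => v \notin sigma_e) B.

(* E_1 ⊆ [ceil(n/(2t))], E_2 ⊆ [ceil((n-t)/(2t))] (n - t truncated at 0;
   when n < t the real ceiling is 0 as well). *)
Definition E1 (n t : nat) (sigma_e : seq nat) : seq nat :=
  [seq i <- iota 1 (ceil_div n (2 * t)) | missing (B1 n t i) sigma_e].
Definition E2 (n t : nat) (sigma_e : seq nat) : seq nat :=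
  [seq i <- iota 1 (ceil_div (n - t) (2 * t)) | missing (B2 n t i) sigma_e].

(* Main.v *)
Require Import Defs.
From mathcomp Require Import all_boot.
From mathcomp Require Import zify.

Lemma two_elts {s : seq nat} : uniq s -> 1 < size s ->
  exists x y, [/\ x < y, x \in s & y \in s].
Proof.
case: s => [|x [|y s]] //= /andP [nx _] _.
have xy : x != y by apply: contraNneq nx => ->; rewrite mem_head.
case: (ltngtP x y) xy => [lt|lt|e] // _.
  by exists x, y; rewrite lt mem_head inE mem_head orbT.
by exists y, x; split => //; rewrite ?mem_head // inE mem_head orbT.
Qed.

Lemma key (o j t i1 i2 v1 v2 : nat) : 0 < i1 < i2 ->
  o + i1.-1 * (2 * t) < v1 <= o + i1.-1 * (2 * t) + 2 * t ->
  o + i2.-1 * (2 * t) < v2 ->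
  j < v1 -> v2 < j + t ->
  exists a, j < o + a * (2 * t) /\ o + a * (2 * t) + 2 <= j + t.
Proof.
move=> /andP [h1 h12] /andP [a1 b1] a2 c1 c2.
exists i1.
have e : i1.-1.+1 <= i2.-1 by lia.
have := leq_mul e (leqnn (2 * t)).
have -> : i1 = i1.-1.+1 by lia.
rewrite mulSn /= => hm; lia.
Qed.

Lemma sep (j t a b : nat) :
  j < a * (2 * t) -> a * (2 * t) + 2 <= j + t ->
  j < t + b * (2 * t) -> t + b * (2 * t) + 2 <= j + t -> False.
Proof.
move=> h1 h2 h3 h4.
case: (leqP a b) => ab.
  have := leq_mul ab (leqnn (2 * t)); lia.
have := leq_mul ab (leqnn (2 * t)); rewrite mulSn; lia.
Qed.

Theorem lemma3 (n t m : nat) (sigma sigma_e : seq nat) :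
  0 < n -> 0 < t ->
  is_perm_seq n sigma ->
  burst_stuck n t m sigma sigma_e ->
  size (E1 n t sigma_e) <= 1 \/ size (E2 n t sigma_e) <= 1.
Proof.
move=> n0 t0 hp [se_sz [j [t1 [pos [hj ht1 hpos hrest]]]]].
have ssz : size sigma = n by rewrite (perm_size hp) size_iota.
have range : forall v, 1 <= v <= n -> v \notin sigma_e -> j < v < j + t1.
  move=> v hv hnot.
  case: (ltngtP j v) => [jv|vj|vj].
  - apply/andP; split => //; rewrite ltnNge; apply/negP => hge; move/negP: hnot; apply.
    have : v \in sigma by rewrite (perm_mem hp) mem_iota; lia.
    move=> vin; set p := index v sigma.
    have pn : p < n by rewrite -ssz index_mem.
    have np : nth 0 sigma p = v by rewrite nth_index.
    case hh : (has (fun l => p == pos l) (iota 0 t1)).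
      case/hasP: hh => l; rewrite mem_iota => /andP [_ lt] /eqP pe.
      have [_ e _ _] := hpos l lt; rewrite -pe np in e; lia.
    have : nth 0 sigma_e p = v.
      rewrite hrest // => l lt pe; move/hasP: hh; apply; exists l.
        by rewrite mem_iota; lia.
      by apply/eqP.
    by move=> <-; apply: mem_nth; rewrite se_sz.
  - exfalso; move/negP: hnot; apply.
    have : v \in sigma by rewrite (perm_mem hp) mem_iota; lia.
    move=> vin; set p := index v sigma.
    have pn : p < n by rewrite -ssz index_mem.
    have np : nth 0 sigma p = v by rewrite nth_index.
    case hh : (has (fun l => p == pos l) (iota 0 t1)).
      case/hasP: hh => l; rewrite mem_iota => /andP [_ lt] /eqP pe.
      have [_ e _ _] := hpos l lt; rewrite -pe np in e; lia.
    have : nth 0 sigma_e p = v.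
      rewrite hrest // => l lt pe; move/hasP: hh; apply; exists l.
        by rewrite mem_iota; lia.
      by apply/eqP.
    by move=> <-; apply: mem_nth; rewrite se_sz.
  - exfalso; move/negP: hnot; apply.
    have lt0 : 0 < t1 by lia.
    have [pl _ _ e] := hpos 0 lt0.
    by rewrite -vj -e; apply: mem_nth; rewrite se_sz.
case: (leqP (size (E1 n t sigma_e)) 1) => h1; first by left.
case: (leqP (size (E2 n t sigma_e)) 1) => h2; first by right.
exfalso.
have u1 : uniq (E1 n t sigma_e) by rewrite /E1 filter_uniq // iota_uniq.
have u2 : uniq (E2 n t sigma_e) by rewrite /E2 filter_uniq // iota_uniq.
have [x [y [xy xE yE]]] := two_elts (s:=E1 n t sigma_e) u1 h1.
have [x' [y' [xy' xE' yE']]] := two_elts (s:=E2 n t sigma_e) u2 h2.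
move: xE yE; rewrite /E1 !mem_filter !mem_iota.
move=> /andP [/hasP [v1 v1B v1n] /andP [x1 _]] /andP [/hasP [v2 v2B v2n] _].
move: v1B v2B; rewrite !mem_filter !mem_iota => /andP [v1n' v1r] /andP [v2n' v2r].
change nat in v1; change nat in v2.
have r1 := range v1 ltac:(nia) v1n. have r2 := range v2 ltac:(nia) v2n.
have [a [ha1 ha2]] := @key 0 j t x y v1 v2 ltac:(nia) ltac:(nia) ltac:(nia)
  ltac:(nia) ltac:(nia).
move: xE' yE'; rewrite /E2 !mem_filter !mem_iota.
move=> /andP [/hasP [w1 w1B w1n] /andP [x1' _]] /andP [/hasP [w2 w2B w2n] _].
move: w1B w2B; rewrite !mem_filter !mem_iota => /andP [w1n' w1r] /andP [w2n' w2r].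
have s1 := range w1 ltac:(nia) w1n. have s2 := range w2 ltac:(nia) w2n.
have [b [hb1 hb2]] := @key t j t x' y' w1 w2 ltac:(nia) ltac:(nia) ltac:(nia)
  ltac:(nia) ltac:(nia).
exact: (@sep j t a b).
Qed.
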